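(* Consider the Single-Demand Facility Location setting with $n$ facilities $F=[n]$, positive capacities $s_1,\dots,s_n$ and demand $D>0$. Let $\mathcal{R}=\{(x^1,y^1),\dots,(x^r,y^r)\}$ be the set of all canonical feasible solutions. Then every feasible solution $(x,y)$ can be written as $(x,y)=\sum_{k=1}^r\lambda_k(x^k,y^k)$ with $\lambda_k\geqslant 0$ for all $k$ and $\sum_{k=1}^r\lambda_k=1$.
   Context: A feasible solution is a pair $(x,y)$ with $y\in\{0,1\}^n$ and $x\in[0,1]^n$ such that $\sum_{i=1}^n x_i=1$ and $0\leqslant x_iD\leqslant y_is_i$ for all $i\in F$. For a feasible solution let $B=\{i\in F: y_i=1\}$ and $\widetilde{F}_2=\{i\in B: 0<x_iD<s_iy_i\}$. A feasible solution is canonical if $|\widetilde{F}_2|\leqslant 1$, i.e. at most one facility supplies a nonzero amount strictly below its capacity. (The set $\mathcal{R}$ is finite.) *)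

(* Defs.v *)
From HB Require Import structures.
From mathcomp Require Import all_boot all_order all_algebra.
Set Implicit Arguments. Unset Strict Implicit. Unset Printing Implicit Defensive.
Import Order.TTheory GRing.Theory Num.Theory.
Local Open Scope ring_scope.

(* Single-Demand Facility Location: facilities F = 'I_n, capacities s,
   demand D.  y : 'I_n -> bool encodes y in {0,1}^n (y_i = (y i)%:R). *)

Definition feasible (R : realFieldType) (n : nat) (s : 'I_n -> R) (D : R)
    (x : 'I_n -> R) (y : 'I_n -> bool) : Prop :=
  (forall i, 0 <= x i <= 1) /\
  (\sum_(i < n) x i = 1) /\
  (forall i, 0 <= x i * D <= (y i)%:R * s i).

Definition openB (n : nat) (y : 'I_n -> bool) : {set 'I_n} := [set i | y i].

Definition F2t (R : realFieldType) (n : nat) (s : 'I_n -> R) (D : R)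
    (x : 'I_n -> R) (y : 'I_n -> bool) : {set 'I_n} :=
  [set i in openB y | (0 < x i * D) && (x i * D < s i * (y i)%:R)].

Definition canonical_sol (R : realFieldType) (n : nat) (s : 'I_n -> R) (D : R)
    (x : 'I_n -> R) (y : 'I_n -> bool) : Prop :=
  feasible s D x y /\ (#|F2t s D x y| <= 1)%N.

(* Main.v *)
Require Import Defs.
From HB Require Import structures.
From mathcomp Require Import all_boot all_order all_algebra.
From mathcomp Require Import ring lra.
Import Order.TTheory GRing.Theory Num.Theory.
Local Open Scope ring_scope.

Section Helpers.
Variables (R : realFieldType) (n : nat) (s : 'I_n -> R) (D : R).
Hypothesis (hs : forall i, 0 < s i) (hD : 0 < D).
Variable y : 'I_n -> bool.

Definition Pdec (x : 'I_n -> R) : Prop :=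
  exists l : seq (R * ('I_n -> R)),
    (forall p, List.In p l -> 0 <= p.1 /\ canonical_sol s D p.2 y) /\
    \sum_(p <- l) p.1 = 1 /\
    (forall i, x i = \sum_(p <- l) p.1 * p.2 i).

Lemma feasI (x : 'I_n -> R) :
  (forall k, 0 <= x k * D <= (y k)%:R * s k) -> \sum_(k < n) x k = 1 ->
  feasible s D x y.
Proof.
move=> h hsum; have x0 : forall k, 0 <= x k.
  by move=> k; have /andP[h1 _] := h k; rewrite pmulr_lge0 in h1.
split; [|split=> //] => k; rewrite x0 /=.
rewrite -hsum (bigD1 k) //= lerDl; apply: sumr_ge0 => l _; exact: x0.
Qed.

Lemma sum_delta (i : 'I_n) : \sum_(k < n) ((k == i)%:R : R) = 1.
Proof.
rewrite (bigD1 i) //= eqxx big1 ?addr0 // => k /negbTE -> //.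
Qed.

Definition dir (i j k : 'I_n) : R := (k == i)%:R - (k == j)%:R.
Definition mv (x : 'I_n -> R) i j t := fun k => x k + t * dir i j k.

Lemma combine x x1 x2 a b : Pdec x1 -> Pdec x2 -> 0 <= a -> 0 <= b ->
  a + b = 1 -> (forall k, x k = a * x1 k + b * x2 k) -> Pdec x.
Proof.
move=> [l1 [h1 [s1 e1]]] [l2 [h2 [s2 e2]]] ha hb hab hx.
exists (map (fun p => (a * p.1, p.2)) l1 ++ map (fun p => (b * p.1, p.2)) l2).
split; [|split].
- move=> p /List.in_app_iff [] /List.in_map_iff [q [<- hq]] /=.
  + have [q0 qc] := h1 q hq; split=> //; exact: mulr_ge0.
  + have [q0 qc] := h2 q hq; split=> //; exact: mulr_ge0.
- by rewrite big_cat !big_map /= -!mulr_sumr s1 s2 !mulr1.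
- move=> k; rewrite big_cat !big_map /=.
  under eq_bigr do rewrite -mulrA.
  under [X in _ = _ + X]eq_bigr do rewrite -mulrA.
  by rewrite -!mulr_sumr -e1 -e2 hx.
Qed.

Lemma base x : feasible s D x y -> (#|F2t s D x y| <= 1)%N -> Pdec x.
Proof.
move=> hf hc; exists [:: (1, x)]; split; [|split].
- by move=> p [<-|[]]; split.
- by rewrite big_seq1.
- by move=> i; rewrite big_seq1 mul1r.
Qed.


Lemma step x i j : i != j -> i \in F2t s D x y -> j \in F2t s D x y ->
  feasible s D x y ->
  let t : R := Num.min (s i / D - x i) (x j) in
  0 < t /\ feasible s D (mv x i j t) y /\
  (#|F2t s D (mv x i j t) y| < #|F2t s D x y|)%N.
Proof.
move=> hij hi hj [_ [hsum hcap]] t.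
have hi' := hi; have hj' := hj.
rewrite /F2t /openB !inE in hi' hj'.
case/andP: hi' => yi /andP[xi0 xis]; case/andP: hj' => yj /andP[xj0 xjs].
rewrite yi mulr1 in xis; rewrite yj mulr1 in xjs.
have Dn : D != 0 by rewrite gt_eqF.
have sdD : s i / D * D = s i by rewrite divfK.
have ha : 0 < s i / D - x i by rewrite subr_gt0 ltr_pdivlMr.
have hb : 0 < x j by rewrite pmulr_lgt0 in xj0.
have xi0' : 0 < x i by rewrite pmulr_lgt0 in xi0.
have ht : 0 < t by rewrite lt_min ha hb.
have hta : t <= s i / D - x i by rewrite ge_min lexx.
have htb : t <= x j by rewrite ge_min lexx orbT.
have tdef : t = Num.min (s i / D - x i) (x j) by [].
clearbody t.
have mvi : mv x i j t i = x i + t by rewrite /mv /dir eqxx (negbTE hij) subr0 mulr1.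
have mvj : mv x i j t j = x j - t.
  by rewrite /mv /dir eqxx eq_sym (negbTE hij) sub0r mulrN1.
have mvk : forall k, k != i -> k != j -> mv x i j t k = x k.
  by move=> k ki kj; rewrite /mv /dir (negbTE ki) (negbTE kj) subrr mulr0 addr0.
split=> //; split.
- apply: feasI.
  + move=> k; case: (eqVneq k i) => [->|ki].
      rewrite mvi yi mul1r; apply/andP; split; first by apply: mulr_ge0; [lra | exact: ltW].
      by rewrite -(ler_pdivlMr (x i + t) (s i) hD); lra.
    case: (eqVneq k j) => [->|kj].
      rewrite mvj yj mul1r; apply/andP; split; first by apply: mulr_ge0; [lra | exact: ltW].
      rewrite -(ler_pdivlMr (x j - t) (s j) hD); rewrite -(ltr_pdivlMr _ _ hD) in xjs; lra.
    by rewrite mvk //; apply: hcap.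
  + rewrite /mv big_split /= -hsum -mulr_sumr /dir sumrB !sum_delta subrr mulr0.
    by rewrite addr0.
- apply: proper_card; apply/properP; split.
  + apply/subsetP => k; case: (eqVneq k i) => [-> _ //|ki].
    case: (eqVneq k j) => [-> _ //|kj].
    by rewrite /F2t !inE mvk.
  + case: (leP (s i / D - x i) (x j)) => hab.
    * have ta : t = s i / D - x i by rewrite tdef min_l.
      exists i => //; rewrite /F2t !inE mvi yi mulr1 ta.
      have -> : x i + (s i / D - x i) = s i / D by rewrite addrC subrK.
      by rewrite sdD ltxx !andbF.
    * have tb : t = x j by rewrite tdef min_r // ltW.
      exists j => //; rewrite /F2t !inE mvj tb.
      by rewrite subrr mul0r ltxx andbF.
Qed.


Lemma mainP m x : (#|F2t s D x y| <= m)%N -> feasible s D x y -> Pdec x.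
Proof.
elim: m x => [|m IH] x hm hf.
  by apply: base => //; exact: leq_trans hm _.
case: (leqP #|F2t s D x y| 1) => hc; first exact: base.
have [i hi] : exists i, i \in F2t s D x y.
  by apply/card_gt0P; exact: ltn_trans hc.
have [j hj] : exists j, j \in F2t s D x y :\ i.
  by apply/card_gt0P; move: hc; rewrite (cardsD1 i) hi add1n ltnS.
move: hj; rewrite in_setD1 => /andP[hji hj].
have hij : i != j by rewrite eq_sym.
pose t1 : R := Num.min (s i / D - x i) (x j).
pose t2 : R := Num.min (s j / D - x j) (x i).
have [t1p [f1 c1]] := step x i j hij hi hj hf.
have [t2p [f2 c2]] := step x j i hji hj hi hf.
rewrite -/t1 in t1p f1 c1; rewrite -/t2 in t2p f2 c2.
have hne : t1 + t2 != 0 by rewrite gt_eqF // addr_gt0.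
apply: (combine x (mv x i j t1) (mv x j i t2) (t2 / (t1 + t2))
   (t1 / (t1 + t2))).
- by apply: IH f1; rewrite -ltnS; exact: leq_trans c1 hm.
- by apply: IH f2; rewrite -ltnS; exact: leq_trans c2 hm.
- by apply: divr_ge0; [exact: ltW | exact: ltW (addr_gt0 _ _)].
- by apply: divr_ge0; [exact: ltW | exact: ltW (addr_gt0 _ _)].
- by field.
- by move=> k; rewrite /mv /dir; field.
Qed.

End Helpers.

Theorem lemma2 (R : realFieldType) (n : nat) (s : 'I_n -> R) (D : R)
    (hs : forall i, 0 < s i) (hD : 0 < D)
    (x : 'I_n -> R) (y : 'I_n -> bool) :
  feasible s D x y ->
  exists (r : nat) (xs : 'I_r -> 'I_n -> R) (ys : 'I_r -> 'I_n -> bool)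
         (lam : 'I_r -> R),
    (forall k, canonical_sol s D (xs k) (ys k)) /\
    (forall k, 0 <= lam k) /\
    (\sum_(k < r) lam k = 1) /\
    (forall i, x i = \sum_(k < r) lam k * xs k i) /\
    (forall i, (y i)%:R = \sum_(k < r) lam k * (ys k i)%:R :> R).
Proof.
move=> hf.
have [l [hl [hsum hx]]] := @mainP R n s D hD y _ x (leqnn _) hf.
pose d : R * ('I_n -> R) := (0, fun _ => 0).
have inl : forall k, (k < size l)%N -> List.In (nth d l k) l.
  elim: l {hl hsum hx} => [|p l IHl] [|k] //= hk; first by left.
  by right; apply: IHl.
exists (size l), (fun k => (nth d l k).2), (fun _ => y), (fun k => (nth d l k).1).
have sumE : forall F : R * ('I_n -> R) -> R,
    \sum_(k < size l) F (nth d l k) = \sum_(p <- l) F p.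
  by move=> F; rewrite (big_nth d) big_mkord.
split; [|split; [|split; [|split]]].
- by move=> k; have [] := hl _ (inl k (ltn_ord k)).
- by move=> k; have [] := hl _ (inl k (ltn_ord k)).
- by rewrite (sumE (fun p => p.1)).
- by move=> i; rewrite (sumE (fun p => p.1 * p.2 i)).
- by move=> i; rewrite -mulr_suml (sumE (fun p => p.1)) hsum mul1r.
Qed.
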